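(* Fix an arbitrary integer load vector $x^{(0)}$ with discrepancy at most $K$, and a sequence of matchings. Consider two rounds $t_1 \leq t_2$ and assume that the time-interval $[0,t_1]$ is $(K,1/(2n))$-smoothing. Then for any node $k\in V$ and $\delta>1/n$, \[ \Pr\left[ \left|\sum_{w\in V} x_w^{(t_1)} \mathbf{M}^{[t_1+1,t_2]}_{w,k} - \overline{x} \right|\geq\delta \right]\leq2 \exp\left( -\frac{(\delta - 1/(2n) )^2}{4 \sum_{w\in V} \left( \mathbf{M}^{[t_1+1,t_2]}_{w,k} -1/n\right)^2}\right). \] In particular, for any node $w\in V$ and $\delta>1/n$, \[ \Pr\left[ \left|x_w^{(t_1)} - \overline{x} \right|\geq\delta \right]\leq2 \exp\left( -\left(\delta - \tfrac{1}{2n} \right)^2\big/ 4 \right). \]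
   Context: $G=(V,E)$ has $n$ nodes. A matching $\mathbf{M}^{(t)}\subseteq E$ is identified with the symmetric matrix with entries $1/2$ on $(u,u),(v,v),(u,v),(v,u)$ for $\{u,v\}\in\mathbf{M}^{(t)}$, $1$ on the diagonal for unmatched nodes, $0$ elsewhere; $\mathbf{M}^{[a,b]}=\prod_{s=a}^b\mathbf{M}^{(s)}$ (identity if $a>b$). Discrete protocol: in round $t$, for each $\{u,v\}\in\mathbf{M}^{(t)}$ both nodes get $\lfloor (x^{(t-1)}_u+x^{(t-1)}_v)/2\rfloor$ tokens and an excess token (if the sum is odd) goes to $u$ or $v$ with probability $1/2$ each, independently; unmatched nodes keep their load. $\overline{x}=\frac1n\sum_w x^{(0)}_w$. The continuous process is $\xi^{(t)}=\xi^{(t-1)}\mathbf{M}^{(t)}$. The interval $[t_1,t_2]$ is $(K,\epsilon)$-smoothing if every $\xi^{(t_1)}\in\mathbb{R}^n$ with discrepancy $\max_{u,v}|\xi_u-\xi_v|\le K$ yields $\xi^{(t_2)}$ with discrepancy at most $\epsilon$. Probabilities are over the random orientations. *)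

(* Defs.v *)
From HB Require Import structures.
From mathcomp Require Import all_boot all_order all_algebra.
From mathcomp Require Import all_classical all_reals all_analysis.
Set Implicit Arguments. Unset Strict Implicit. Unset Printing Implicit Defensive.
Import Order.TTheory GRing.Theory Num.Theory.
Local Open Scope ring_scope.

Definition simple_graph (n : nat) (e : rel 'I_n) : Prop :=
  irreflexive e /\ symmetric e.

(* A matching is given by its "partner" involution p : u is matched with p u
   when p u != u, and unmatched when p u = u.  It is a matching of the graph e
   when every matched pair is an edge. *)
Definition is_matching (n : nat) (e : rel 'I_n) (p : 'I_n -> 'I_n) : Prop :=
  (forall u, p (p u) = u) /\ (forall u, p u != u -> e u (p u)).

Definition match_mx (R : numFieldType) (n : nat) (p : 'I_n -> 'I_n) : 'M[R]_n :=
  \matrix_(u, v)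
    if u == v then (if p u == u then 1 else 2^-1)
    else (if p u == v then 2^-1 else 0).

Definition match_prod (R : numFieldType) (n : nat) (Ms : nat -> 'I_n -> 'I_n)
    (a b : nat) : 'M[R]_n :=
  \big[mulmx/1%:M]_(a <= s < b.+1) match_mx R (Ms s).

Definition discr (R : realDomainType) (n : nat) (xi : 'rV[R]_n) : R :=
  \big[Num.max/0]_(u < n) \big[Num.max/0]_(v < n) `|xi 0 u - xi 0 v|.

Definition smoothing (R : realFieldType) (n : nat) (Ms : nat -> 'I_n -> 'I_n)
    (t1 t2 : nat) (K eps : R) : Prop :=
  forall xi : 'rV[R]_n, discr xi <= K ->
    discr (xi *m match_prod R Ms t1.+1 t2) <= eps.

(* One round of the discrete protocol with matching p.  The random orientation
   of the edge {u, p u} is encoded by the bit b m of its smaller endpoint m: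
   the excess token goes to m iff b m is true. *)
Definition disc_step (n : nat) (p : 'I_n -> 'I_n) (b : 'I_n -> bool)
    (x : 'I_n -> int) : 'I_n -> int :=
  fun u =>
    let v := p u in
    if v == u then x u else
    let s := x u + x v in
    let m := if (val u <= val v)%N then u else v in
    (s %/ 2)%Z + (if ((s %% 2)%Z == 1) && (b m == (u == m)) then 1 else 0).

Fixpoint load (n : nat) (Ms : nat -> 'I_n -> 'I_n) (x0 : 'I_n -> int)
    (bits : nat -> 'I_n -> bool) (t : nat) : 'I_n -> int :=
  match t with
  | 0 => x0
  | t'.+1 => disc_step (Ms t) (bits t) (load Ms x0 bits t')
  end.

(* Sample space for rounds 1..T: one independent fair bit per (round, node);
   round t uses omega (t-1).  Uniform probability. *)
Definition Omega (n T : nat) := {ffun 'I_T -> {ffun 'I_n -> bool}}.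

Definition bits_of (n T : nat) (omega : Omega n T) : nat -> 'I_n -> bool :=
  fun t u => match t with
             | 0 => false
             | s.+1 => match (insub s : option 'I_T) with
                       | Some i => omega i u
                       | None => false
                       end
             end.

Definition Pr (R : numFieldType) (n T : nat) (A : pred (Omega n T)) : R :=
  #|[pred w in A]|%:R / #|Omega n T|%:R.

Definition avg_load (R : numFieldType) (n : nat) (x0 : 'I_n -> int) : R :=
  (\sum_(w < n) (x0 w)%:~R) / n%:R.

(* Main.v *)
Require Import Defs.
From HB Require Import structures.
From mathcomp Require Import all_boot all_order all_algebra.
From mathcomp Require Import all_classical all_reals all_analysis.
From mathcomp Require Import ring lra zify.
Import Order.TTheory GRing.Theory Num.Theory.
Local Open Scope ring_scope.
Set Implicit Arguments. Unset Strict Implicit.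

Section A.
Variable R : realType.
Variable n : nat.
Implicit Types p : 'I_n -> 'I_n.

Lemma sum_delta (a : 'I_n) (F : 'I_n -> R) :
  \sum_v (a == v)%:R * F v = F a.
Proof.
rewrite (bigD1 a) //= eqxx mul1r big1 ?addr0 // => v /negPf.
by rewrite eq_sym => ->; rewrite mul0r.
Qed.

Lemma match_mxE p (w v : 'I_n) :
  match_mx R p w v = ((w == v)%:R + (p w == v)%:R) / 2.
Proof.
rewrite /match_mx mxE; case: (eqVneq w v) => [<-|wv].
  rewrite ?eqxx; case: (eqVneq (p w) w) => [_|ne] /=.
    by rewrite -[1 + 1]/(2%:R) divff // pnatr_eq0.
  by rewrite addr0 mul1r.
by case: (eqVneq (p w) v) => _ /=; rewrite add0r ?mul1r ?mul0r.
Qed.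

Lemma match_mulE p (N : 'M[R]_n) w j :
  (match_mx R p *m N) w j = (N w j + N (p w) j) / 2.
Proof.
rewrite mxE.
under eq_bigr do rewrite match_mxE mulrAC mulrDl.
by rewrite -mulr_suml big_split /= !sum_delta.
Qed.

Definition stoch (M : 'M[R]_n) :=
  [/\ forall i j, 0 <= M i j, forall i, \sum_j M i j = 1 & forall j, \sum_i M i j = 1].

Lemma stoch_match p : (forall u, p (p u) = u) -> stoch (match_mx R p).
Proof.
move=> pinv; split.
- move=> i j; rewrite match_mxE; apply: divr_ge0 => //; apply: addr_ge0; exact: ler0n.
- move=> i; under eq_bigr do rewrite match_mxE mulrDl.
  rewrite big_split /= -!mulr_suml.
  have h a : \sum_(v < n) (a == v)%:R = 1 :> R.
    by under eq_bigr do rewrite -[_%:R]mulr1; rewrite sum_delta.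
  by rewrite !h -mulrDl divff // -[1 + 1]/(2%:R) pnatr_eq0.
- move=> j; under eq_bigr do rewrite match_mxE mulrDl.
  rewrite big_split /= -!mulr_suml.
  have h1 : \sum_(i < n) (i == j)%:R = 1 :> R.
    by under eq_bigr do rewrite eq_sym -[_%:R]mulr1; rewrite sum_delta.
  have h2 : \sum_(i < n) (p i == j)%:R = 1 :> R.
    under eq_bigr => i _.
      have -> : (p i == j) = (p j == i).
        by apply/eqP/eqP => <-; rewrite pinv.
      rewrite -[_%:R]mulr1. over.
    by rewrite sum_delta.
  by rewrite h1 h2 -mulrDl divff // -[1 + 1]/(2%:R) pnatr_eq0.
Qed.

Lemma stoch1 : stoch 1%:M.
Proof.
split.
- by move=> i j; rewrite mxE; exact: ler0n.
- by move=> i; under eq_bigr do rewrite mxE -[_%:R]mulr1; rewrite sum_delta.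
- by move=> j; under eq_bigr do rewrite mxE eq_sym -[_%:R]mulr1; rewrite sum_delta.
Qed.

Lemma stochM (A B : 'M[R]_n) : stoch A -> stoch B -> stoch (A *m B).
Proof.
move=> [A0 Ar Ac] [B0 Br Bc]; split.
- move=> i j; rewrite mxE; apply: sumr_ge0 => k _; exact: mulr_ge0.
- move=> i; under eq_bigr do rewrite mxE.
  rewrite exchange_big /=.
  under eq_bigr do rewrite -mulr_sumr Br mulr1.
  exact: Ar.
- move=> j; under eq_bigr do rewrite mxE.
  rewrite exchange_big /=.
  under eq_bigr do rewrite -mulr_suml Ac mul1r.
  exact: Bc.
Qed.

Lemma stoch_prod (Ms : nat -> 'I_n -> 'I_n) a b :
  (forall t, (0 < t)%N -> forall u, Ms t (Ms t u) = u) -> (0 < a)%N ->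
  stoch (match_prod R Ms a b).
Proof.
move=> inv a0; rewrite /match_prod.
rewrite big_nat_cond.
apply: (big_ind (fun M : 'M[R]_n => stoch M)); first exact: stoch1.
  by move=> ? ?; apply: stochM.
move=> i /andP[/andP[ai _] _]; apply: stoch_match; apply: inv.
by apply: leq_trans ai.
Qed.

Lemma match_prod_split (Ms : nat -> 'I_n -> 'I_n) a t1 t2 :
  (a <= t1.+1)%N -> (t1 <= t2)%N ->
  match_prod R Ms a t2 = match_prod R Ms a t1 *m match_prod R Ms t1.+1 t2.
Proof.
move=> h1 h2; rewrite /match_prod.
move: h1; move Hd: (t1.+1 - a)%N => d.
elim: d a Hd => [|d IH] a Hd h1.
  have -> : a = t1.+1 by lia.
  by rewrite [X in X *m _]big_geq // mul1mx.
rewrite big_ltn; last by lia.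
rewrite [X in _ = X *m _]big_ltn; last by lia.
by rewrite (IH a.+1); [rewrite mulmxA| lia | lia].
Qed.

Lemma match_prodS (Ms : nat -> 'I_n -> 'I_n) t t2 : (t <= t2)%N ->
  match_prod R Ms t t2 = match_mx R (Ms t) *m match_prod R Ms t.+1 t2.
Proof. by move=> h; rewrite /match_prod big_ltn. Qed.

End A.

Section B.
Variable R : realType.
Variable n : nat.

Lemma mod2_cases (s : int) : (s %% 2)%Z = 0 \/ (s %% 2)%Z = 1.
Proof. lia. Qed.

Lemma int_dec (s : int) :
  (s%:~R : R) = ((s %/ 2)%Z)%:~R * 2 + ((s %% 2)%Z)%:~R.
Proof. by rewrite {1}(divz_eq s 2) intrD intrM. Qed.

Definition err (p : 'I_n -> 'I_n) (b : 'I_n -> bool) (x : 'I_n -> int) u : R :=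
  (disc_step p b x u)%:~R - ((x u)%:~R + (x (p u))%:~R) / 2.

Lemma err_fix p b x u : p u = u -> err p b x u = 0.
Proof.
move=> h; rewrite /err /disc_step h eqxx.
lra.
Qed.

Lemma err_lt p b x (u : 'I_n) : (val u < val (p u))%N ->
  err p b x u = if ((x u + x (p u)) %% 2)%Z == 1 then (if b u then 2^-1 else - 2^-1) else 0.
Proof.
move=> h; have hne : p u != u.
  by apply/eqP => e; rewrite e ltnn in h.
rewrite /err /disc_step (negPf hne) (ltnW h) eqxx.
set s := x u + x (p u).
rewrite -intrD -/s (int_dec s).
have h2 : (2 : R) != 0 by rewrite pnatr_eq0.
case: (mod2_cases s) => ->; rewrite ?eqxx /=; case: (b u) => /=; rewrite ?intrD /=; lra.
Qed.

Lemma err_sym p b x u : (forall v, p (p v) = v) ->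
  err p b x u + err p b x (p u) = 0.
Proof.
move=> pinv.
case: (eqVneq (p u) u) => [h|hne].
  by rewrite !err_fix ?addr0 ?h.
have hv : val u != val (p u) by apply/eqP => /val_inj e; move: hne; rewrite -e eqxx.
wlog hlt : u hne hv / (val u < val (p u))%N.
  move=> W; case: (ltngtP (val u) (val (p u))) => H; first exact: W.
    rewrite addrC; have := W (p u); rewrite pinv; apply.
    - by rewrite eq_sym.
    - by rewrite eq_sym.
    - done.
  by rewrite H eqxx in hv.
rewrite (err_lt _ _ hlt).
rewrite /err /disc_step pinv (eq_sym u (p u)) (negPf hne).
have -> : (val (p u) <= val u)%N = false by apply/negbTE; rewrite -ltnNge.
rewrite /=.
rewrite (negPf hne) [x (p u) + x u]addrC [(x (p u))%:~R + _]addrC -intrD.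
set s := x u + x (p u).
rewrite intrD (int_dec s).
case: (mod2_cases s) => ->; rewrite ?eqxx /=; case: (b u) => /=; rewrite ?intrD /=; lra.
Qed.

End B.

Section C.
Variable R : realType.
Variable n : nat.

Definition hinc (p : 'I_n -> 'I_n) (x : 'I_n -> int) (c : 'I_n -> R) (w : 'I_n) (bb : bool) : R :=
  if (val w < val (p w))%N then
    (if ((x w + x (p w)) %% 2)%Z == 1 then (if bb then 2^-1 else - 2^-1) else 0) * (c w - c (p w))
  else 0.

Lemma sum_inv (p : 'I_n -> 'I_n) (F : 'I_n -> R) : (forall v, p (p v) = v) ->
  \sum_w F (p w) = \sum_w F w.
Proof.
move=> pinv; rewrite [RHS](reindex_inj (can_inj pinv)) /=; done.
Qed.

Lemma incr (p : 'I_n -> 'I_n) b x (c : 'I_n -> R) : (forall v, p (p v) = v) ->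
  \sum_w (disc_step p b x w)%:~R * c w =
  \sum_w (x w)%:~R * ((c w + c (p w)) / 2) + \sum_w hinc p x c w (b w).
Proof.
move=> pinv.
have e1 w : (disc_step p b x w)%:~R = ((x w)%:~R + (x (p w))%:~R) / 2 + err R p b x w :> R.
  by rewrite /err addrC subrK.
under eq_bigr do rewrite e1 mulrDl.
rewrite big_split /=; congr (_ + _).
  transitivity (\sum_w ((x w)%:~R * c w / 2) + \sum_w ((x (p w))%:~R * c w / 2)).
    by rewrite -big_split; apply: eq_bigr => w _ /=; lra.
  rewrite -[X in _ + X = _](sum_inv (fun w => (x (p w))%:~R * c w / 2) pinv) /=.
  under [X in _ + X = _]eq_bigr do rewrite pinv.
  rewrite -big_split /=; apply: eq_bigr => w _; lra.
set g := fun w => err R p b x w * (c w - c (p w)).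
have gs w : g (p w) = g w.
  rewrite /g pinv; have := @err_sym R n p b x w pinv; rewrite [err _ _ _ _ (p w)]/= => E.
  have -> : err R p b x (p w) = - err R p b x w by lra.
  lra.
have s1 : \sum_w err R p b x w * c w = 2^-1 * \sum_w g w.
  have : \sum_w err R p b x w * c w = \sum_w (- err R p b x w) * c (p w).
    rewrite -(sum_inv (fun w => - err R p b x w * c (p w)) pinv).
    apply: eq_bigr => w _; rewrite pinv.
    have := @err_sym R n p b x w pinv; move=> E.
    have -> : err R p b x (p w) = - err R p b x w by lra.
    by rewrite opprK.
  move=> E; rewrite /g.
  under [in RHS]eq_bigr do rewrite mulrBr.
  rewrite sumrB.
  have E2 : \sum_w err R p b x w * c (p w) = - \sum_w err R p b x w * c w.
    by rewrite E -sumrN; apply: eq_bigr => w _; rewrite mulNr opprK.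
  rewrite E2; lra.
have s2 : \sum_w g w = 2 * \sum_w (if (val w < val (p w))%N then g w else 0).
  have -> : \sum_w g w = \sum_w ((if (val w < val (p w))%N then g w else 0)
                               + (if (val (p w) < val w)%N then g w else 0)).
    apply: eq_bigr => w _.
    case: (ltngtP (val w) (val (p w))) => H; rewrite ?addr0 ?add0r //.
    have E : p w = w by apply/val_inj.
    by rewrite /g E subrr mulr0 ?addr0.
  rewrite big_split /=.
  rewrite -(sum_inv (fun w => if (val (p w) < val w)%N then g w else 0) pinv).
  under [X in _ + X = _]eq_bigr do rewrite pinv gs.
  lra.
rewrite s1 s2 mulrA mulVf ?pnatr_eq0 // mul1r.
apply: eq_bigr => w _; rewrite /hinc /g.
by case: ifP => // H; rewrite err_lt.
Qed.

End C.

Section D.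
Variable R : realType.
Variable n : nat.

Lemma cosh_bound (y : R) : expR y + expR (- y) <= 2 * expR (2 * y ^+ 2).
Proof.
have AB : expR y * expR (- y) = 1 by rewrite -expRD subrr expR0.
have hA := expR_ge1Dx y; have hB := expR_ge1Dx (- y).
have A0 := expR_gt0 y; have B0 := expR_gt0 (- y).
have hE := expR_ge1Dx (2 * y ^+ 2).
case: (lerP (2^-1) `|y|) => hy.
  have hyy : `|y| <= 2 * y ^+ 2.
    rewrite -real_normK ?num_real //.
    have : 0 <= `|y| by [].
    nra.
  have e1 : expR y <= expR (2 * y ^+ 2).
    by rewrite ler_expR; apply: le_trans hyy; exact: ler_norm.
  have e2 : expR (- y) <= expR (2 * y ^+ 2).
    by rewrite ler_expR; apply: le_trans hyy; rewrite -normrN; exact: ler_norm.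
  lra.
have hy1 : y < 2^-1 by apply: le_lt_trans hy; exact: ler_norm.
have hy2 : - 2^-1 < y by rewrite ltrNl; apply: le_lt_trans hy; rewrite -normrN; exact: ler_norm.
have h1 : expR y * (1 - y) <= 1 by nra.
have h2 : expR (- y) * (1 + y) <= 1 by nra.
have h3 : (expR y + expR (- y)) * (1 - y ^+ 2) <= 2 by nra.
have h4 : (expR y + expR (- y)) <= 2 + 4 * y ^+ 2 by nra.
lra.
Qed.

Definition Phi (c : 'I_n -> R) := \sum_w (c w - n%:R^-1) ^+ 2.

Lemma sum_half (p : 'I_n -> 'I_n) (g : 'I_n -> R) : (forall v, p (p v) = v) ->
  (forall w, g (p w) = g w) -> (forall w, p w = w -> g w = 0) ->
  \sum_w g w = 2 * \sum_w (if (val w < val (p w))%N then g w else 0).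
Proof.
move=> pinv gs g0.
have -> : \sum_w g w = \sum_w ((if (val w < val (p w))%N then g w else 0)
                             + (if (val (p w) < val w)%N then g w else 0)).
  apply: eq_bigr => w _.
  case: (ltngtP (val w) (val (p w))) => H; rewrite ?addr0 ?add0r //.
  by rewrite g0 ?addr0 //; apply/val_inj.
rewrite big_split /=.
rewrite -(sum_inv (fun w => if (val (p w) < val w)%N then g w else 0) pinv).
under [X in _ + X = _]eq_bigr do rewrite pinv gs.
lra.
Qed.

Lemma Phi_step (p : 'I_n -> 'I_n) (c : 'I_n -> R) : (forall v, p (p v) = v) ->
  Phi c - Phi (fun w => (c w + c (p w)) / 2) =
  2 * \sum_w (if (val w < val (p w))%N then (c w - c (p w)) ^+ 2 / 4 else 0).
Proof.
move=> pinv; rewrite /Phi -sumrB.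
pose F := fun w => (c w - n%:R^-1) ^+ 2 - ((c w + c (p w)) / 2 - n%:R^-1) ^+ 2.
transitivity (\sum_w F w); first by [].
have -> : \sum_w F w = 2^-1 * \sum_w (F w + F (p w)).
  rewrite [in RHS]big_split /= (sum_inv F pinv); lra.
have -> : \sum_w (F w + F (p w)) = \sum_w (c w - c (p w)) ^+ 2 / 2.
  apply: eq_bigr => w _; rewrite /F pinv; lra.
rewrite (@sum_half p (fun w => (c w - c (p w)) ^+ 2 / 2)) //.
- rewrite mulrA mulVf ?pnatr_eq0 // mul1r mulr_sumr; apply: eq_bigr => w _.
  by case: ifP => _; [lra | rewrite mulr0].
- by move=> w; rewrite pinv; lra.
- by move=> w ->; rewrite subrr expr0n /= mul0r.
Qed.

Lemma card_ffun_sum : \sum_(bt : {ffun 'I_n -> bool}) (1 : R) = \prod_(w < n) 2.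
Proof.
have := @bigA_distr_bigA R 0 1 *%R +%R 'I_n bool (fun _ _ => 1).
rewrite /= => E.
transitivity (\sum_(bt : {ffun 'I_n -> bool}) \prod_(w < n) (1 : R)).
  by apply: eq_bigr => bt _; rewrite prodr_const expr1n.
rewrite -E; apply: eq_bigr => w _; rewrite big_bool /=.
done.
Qed.

Lemma mgf_step (p : 'I_n -> 'I_n) x (c : 'I_n -> R) (th : R) :
  (forall v, p (p v) = v) ->
  \sum_(bt : {ffun 'I_n -> bool}) expR (th * \sum_w hinc p x c w (bt w))
  <= (\sum_(bt : {ffun 'I_n -> bool}) (1 : R)) *
     expR (th ^+ 2 * (Phi c - Phi (fun w => (c w + c (p w)) / 2))).
Proof.
move=> pinv.
under eq_bigr do rewrite mulr_sumr expR_sum.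
have := @bigA_distr_bigA R 0 1 *%R +%R 'I_n bool (fun w bb => expR (th * hinc p x c w bb)).
rewrite /= => <-.
rewrite card_ffun_sum Phi_step // mulrA.
rewrite mulr_sumr.
rewrite expR_sum.
rewrite -big_split /=.
apply: ler_prod => w _; apply/andP; split.
  by apply: sumr_ge0 => bb _; exact: expR_ge0.
rewrite big_bool /=.
have hf : hinc p x c w false = - hinc p x c w true.
  rewrite /hinc; case: ifP => _; last by rewrite oppr0.
  by case: ifP => _ /=; rewrite ?mul0r ?oppr0 ?mulNr.
rewrite hf mulrN.
apply: le_trans (cosh_bound _) _.
rewrite ler_pM2l // ler_expR.
have : (hinc p x c w true) ^+ 2 <= (if (val w < val (p w))%N then (c w - c (p w)) ^+ 2 / 4 else 0).
  rewrite /hinc; case: ifP => _; last by rewrite expr0n.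
  case: ifP => _; last by rewrite mul0r expr0n /= divr_ge0 // sqr_ge0.
  have q : (2^-1 : R) ^+ 2 = 4^-1.
    by field.
  have q2 : (- 2^-1 : R) ^+ 2 = 4^-1 by rewrite sqrrN.
  by rewrite /= exprMn q mulrC.
have : 0 <= th ^+ 2 by exact: sqr_ge0.
move=> h1 h2; rewrite exprMn.
move: h2; set a := (X in _ <= X) => h2.
change (2 * (th ^+ 2 * hinc p x c w true ^+ 2) <= th ^+ 2 * 2 * a).
nra.
Qed.

End D.

Section E.
Variable R : realType.
Variable n : nat.

Definition ext T (om : Omega n T) (bt : {ffun 'I_n -> bool}) : Omega n T.+1 :=
  [ffun i : 'I_T.+1 => match (insub (val i) : option 'I_T) with
                        | Some j => om j | None => bt end].

Definition unext T (w : Omega n T.+1) : Omega n T * {ffun 'I_n -> bool} :=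
  ([ffun j : 'I_T => w (widen_ord (leqnSn T) j)], w ord_max).

Lemma ext_bij T : bijective (fun pr : Omega n T * {ffun 'I_n -> bool} => ext pr.1 pr.2).
Proof.
exists (@unext T).
- move=> [om bt] /=; rewrite /unext /ext /=; congr (_, _).
    apply/ffunP => j; rewrite !ffunE /=.
    case: insubP => [j' _ vj|]; last by rewrite /= ltn_ord.
    by congr (om _); apply: val_inj.
  rewrite ffunE; case: insubP => //= j' _ vj.
  by have := ltn_ord j'; rewrite vj ltnn.
- move=> w; rewrite /unext /ext /=; apply/ffunP => i; rewrite !ffunE.
  case: insubP => [j _ vj|].
    by rewrite ffunE; congr (w _); apply: val_inj.
  rewrite -leqNgt => h; congr (w _); apply: val_inj => /=.
  by apply/eqP; rewrite eqn_leq h -ltnS ltn_ord.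
Qed.

Lemma sum_ext T (G : Omega n T.+1 -> R) :
  \sum_(w : Omega n T.+1) G w = \sum_(om : Omega n T) \sum_(bt : {ffun 'I_n -> bool}) G (ext om bt).
Proof.
rewrite pair_big /=.
by rewrite (reindex _ (onW_bij _ (ext_bij T))).
Qed.

Lemma bits_ext_le T (om : Omega n T) (bt : {ffun 'I_n -> bool}) t u : (t <= T)%N ->
  bits_of (ext om bt) t u = bits_of om t u.
Proof.
case: t => [|s] //= h.
case: insubP => [i _ vi|]; last by rewrite ltnS (ltnW h).
rewrite ffunE; case: insubP => [j _ vj|]; last by rewrite vi h.
case: insubP => [j' _ vj'|]; last by rewrite h.
by congr (om _ u); apply: val_inj; rewrite /= vj vj' vi.
Qed.

Lemma bits_ext_last T (om : Omega n T) (bt : {ffun 'I_n -> bool}) u : bits_of (ext om bt) T.+1 u = bt u.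
Proof.
rewrite /=; case: insubP => [i _ vi|]; last by rewrite /= ltnSn.
rewrite ffunE; case: insubP => [j _ vj|] //.
by have := ltn_ord j; rewrite vj vi ltnn.
Qed.

Lemma disc_step_ext p (b1 b2 : 'I_n -> bool) (x1 x2 : 'I_n -> int) u :
  b1 =1 b2 -> x1 =1 x2 -> disc_step p b1 x1 u = disc_step p b2 x2 u.
Proof. by move=> hb hx; rewrite /disc_step !hx hb. Qed.

Lemma load_ext Ms x0 (b1 b2 : nat -> 'I_n -> bool) t :
  (forall s u, (s <= t)%N -> b1 s u = b2 s u) ->
  forall u, load Ms x0 b1 t u = load Ms x0 b2 t u.
Proof.
elim: t => [|t IH] hb u //=.
apply: disc_step_ext => v; first by apply: hb.
by apply: IH => s w hs; apply: hb; apply: leqW.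
Qed.

End E.

Section F.
Variable R : realType.
Variable n : nat.
Variable Ms : nat -> 'I_n -> 'I_n.
Variable x0 : 'I_n -> int.
Variables t2 : nat.
Variable k : 'I_n.
Hypothesis inv : forall t, (0 < t)%N -> forall u, Ms t (Ms t u) = u.

Definition cc t : 'I_n -> R := fun w => match_prod R Ms t.+1 t2 w k.
Definition YY T (om : Omega n T) : R :=
  \sum_w (load Ms x0 (bits_of om) T w)%:~R * cc T w.
Definition Y0 : R := \sum_w (x0 w)%:~R * cc 0 w.

Lemma cc_step T : (T < t2)%N ->
  forall w, cc T w = (cc T.+1 w + cc T.+1 (Ms T.+1 w)) / 2.
Proof.
move=> h w; rewrite /cc (match_prodS _ _ h) match_mulE //.
Qed.

Lemma mgf (th : R) T : (T <= t2)%N ->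
  \sum_(om : Omega n T) expR (th * (YY om - Y0)) <=
  (\sum_(om : Omega n T) (1 : R)) * expR (th ^+ 2 * (Phi (cc T) - Phi (cc 0))).
Proof.
elim: T => [|T IH] hT.
  rewrite subrr mulr0 expR0 mulr1 le_eqVlt; apply/orP; left.
  apply/eqP/eq_bigr => om _.
  by rewrite /YY /Y0 /= subrr mulr0 expR0.
have hT' : (T <= t2)%N by apply: ltnW.
have pinv := inv (ltn0Sn T).
have hY (om : Omega n T) (bt : {ffun 'I_n -> bool}) : YY (ext om bt) = YY om + \sum_w hinc (Ms T.+1) (load Ms x0 (bits_of om) T) (cc T.+1) w (bt w).
  rewrite /YY /=.
  have -> : \sum_w (disc_step (Ms T.+1) (bits_of (ext om bt) T.+1)
                     (load Ms x0 (bits_of (ext om bt)) T) w)%:~R * cc T.+1 w =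
            \sum_w (disc_step (Ms T.+1) bt (load Ms x0 (bits_of om) T) w)%:~R * cc T.+1 w.
    apply: eq_bigr => w _; congr (_%:~R * _); apply: disc_step_ext.
      by move=> u; rewrite bits_ext_last.
    by apply: load_ext => s u hs; rewrite bits_ext_le.
  rewrite incr //; congr (_ + _); apply: eq_bigr => w _.
  by rewrite (cc_step hT).
have hPhi : Phi (fun w => (cc T.+1 w + cc T.+1 (Ms T.+1 w)) / 2) = Phi (cc T).
  by apply: eq_bigr => w _; rewrite (cc_step hT).
rewrite sum_ext.
under eq_bigr => om _.
  under eq_bigr => bt _ do rewrite hY addrAC mulrDr expRD.
  rewrite -mulr_sumr.
  over.
rewrite /=.
apply: le_trans (_ : \sum_(om : Omega n T) (expR (th * (YY om - Y0)) *
     ((\sum_(bt : {ffun 'I_n -> bool}) (1 : R)) *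
      expR (th ^+ 2 * (Phi (cc T.+1) - Phi (cc T))))) <= _).
  apply: ler_sum => om _; apply: ler_wpM2l; first exact: expR_ge0.
  have := mgf_step (load Ms x0 (bits_of om) T) (cc T.+1) th pinv.
  by rewrite hPhi.
rewrite -mulr_suml.
apply: le_trans (ler_wpM2r _ (IH hT')) _.
  by apply: mulr_ge0; [apply: sumr_ge0 => ? _; exact: ler01 | exact: expR_ge0].
rewrite sum_ext.
have -> : \sum_(om : Omega n T) \sum_(bt : {ffun 'I_n -> bool}) (1 : R) =
          (\sum_(om : Omega n T) (1 : R)) * \sum_(bt : {ffun 'I_n -> bool}) (1 : R).
  by rewrite mulr_suml; apply: eq_bigr => om _; rewrite mul1r.
rewrite -!mulrA; apply: ler_wpM2l; first by apply: sumr_ge0 => ? _; exact: ler01.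
rewrite mulrCA; apply: ler_wpM2l; first by apply: sumr_ge0 => ? _; exact: ler01.
rewrite -expRD le_eqVlt; apply/orP; left; apply/eqP; congr expR; ring.
Qed.

End F.

Section G.
Variable R : realType.

Lemma card_sumR (T : finType) (A : pred T) :
  (#|[pred w in A]|%:R : R) = \sum_w (if A w then 1 else 0).
Proof. by rewrite -sum1_card natr_sum big_mkcond. Qed.

Lemma cardT_sumR (T : finType) : (#|T|%:R : R) = \sum_(w : T) 1.
Proof. by rewrite -sum1_card natr_sum. Qed.

Lemma bigmax_ge (I : eqType) (s : seq I) (F : I -> R) x :
  x \in s -> F x <= \big[Num.max/0]_(i <- s) F i.
Proof.
elim: s => [//|a s IH]; rewrite inE big_cons => /orP[/eqP ->|/IH h].
  by rewrite le_max lexx.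
by rewrite le_max h orbT.
Qed.

Lemma discr_ge n (xi : 'rV[R]_n) u v : `|xi 0 u - xi 0 v| <= discr xi.
Proof.
rewrite /discr; apply: le_trans (bigmax_ge _ (mem_index_enum u)).
exact: (bigmax_ge (fun v => `|xi 0 u - xi 0 v|) (mem_index_enum v)).
Qed.

Lemma load_sum n Ms (x0 : 'I_n -> int) bits t :
  (forall t, (0 < t)%N -> forall u, Ms t (Ms t u) = u) ->
  \sum_w ((load Ms x0 bits t w)%:~R : R) = \sum_w (x0 w)%:~R.
Proof.
move=> inv; elim: t => [//|t IH] /=.
have := @incr R n (Ms t.+1) (bits t.+1) (load Ms x0 bits t) (fun _ => 1) (inv _ (ltn0Sn t)).
move=> E.
transitivity (\sum_w ((disc_step (Ms t.+1) (bits t.+1) (load Ms x0 bits t) w)%:~R : R) * 1).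
  by apply: eq_bigr => w _; rewrite mulr1.
rewrite E -IH.
have -> : \sum_w hinc (Ms t.+1) (load Ms x0 bits t) (fun _ => 1 : R) w (bits t.+1 w) = 0.
  by apply: big1 => w _; rewrite /hinc subrr mulr0; case: ifP.
rewrite addr0; apply: eq_bigr => w _.
have -> : (1 + 1) / 2 = 1 :> R by field.
by rewrite mulr1.
Qed.

End G.

Lemma Y0_bound (R : realType) n (Ms : nat -> 'I_n -> 'I_n) (x0 : 'I_n -> int) (K : R) t1 t2 (k : 'I_n) :
  (forall t, (0 < t)%N -> forall u, Ms t (Ms t u) = u) ->
  discr (\row_u ((x0 u)%:~R : R)) <= K -> (t1 <= t2)%N ->
  smoothing Ms 0 t1 K (2 * n%:R)^-1 ->
  `|Y0 R Ms x0 t2 k - avg_load R x0| <= (2 * n%:R)^-1.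
Proof.
move=> inv hK h12 hsm.
have n0 : (0 < n)%N by exact: (leq_ltn_trans (leq0n k) (ltn_ord k)).
have nR : (n%:R : R) != 0 by rewrite pnatr_eq0 -lt0n.
set P := match_prod R Ms 1 t1; set M := match_prod R Ms t1.+1 t2.
set xi := \row_u ((x0 u)%:~R : R) *m P.
have hxi : discr xi <= (2 * n%:R)^-1 by exact: hsm.
have [P0 Prw Pc] : stoch P by exact: stoch_prod.
have [M0 Mr Mc] : stoch M by exact: stoch_prod.
have xiE v : xi 0 v = \sum_w (x0 w)%:~R * P w v.
  by rewrite /xi mxE; apply: eq_bigr => w _; rewrite mxE.
have Y0E : Y0 R Ms x0 t2 k = \sum_v xi 0 v * M v k.
  rewrite /Y0 /cc (match_prod_split _ _ (_ : (1 <= t1.+1)%N) h12) //.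
  under eq_bigr do rewrite mxE mulr_sumr.
  rewrite exchange_big /=; apply: eq_bigr => v _.
  by rewrite xiE mulr_suml; apply: eq_bigr => w _; rewrite mulrA.
have sumxi : \sum_v xi 0 v = \sum_w (x0 w)%:~R.
  under eq_bigr do rewrite xiE.
  rewrite exchange_big /=; apply: eq_bigr => w _.
  by rewrite -mulr_sumr Prw mulr1.
have avgE : avg_load R x0 = (\sum_v xi 0 v) / n%:R by rewrite sumxi.
have dev v : `|xi 0 v - avg_load R x0| <= discr xi.
  have -> : xi 0 v - avg_load R x0 = (\sum_u (xi 0 v - xi 0 u)) / n%:R.
    rewrite sumrB sumr_const card_ord avgE -(mulr_natr (xi 0 v)).
    by field.
  rewrite normrM normfV normr_nat ler_pdivrMr ?ltr0n //.
  apply: le_trans (ler_norm_sum _ _ _) _.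
  apply: le_trans (_ : \sum_(u < n) discr xi <= _).
    by apply: ler_sum => u _; exact: discr_ge.
  by rewrite sumr_const card_ord mulr_natr.
have -> : Y0 R Ms x0 t2 k - avg_load R x0 = \sum_v (xi 0 v - avg_load R x0) * M v k.
  rewrite Y0E; under [RHS]eq_bigr do rewrite mulrBl.
  by rewrite sumrB -mulr_sumr Mc mulr1.
apply: le_trans (ler_norm_sum _ _ _) _.
apply: le_trans (_ : \sum_v (2 * n%:R)^-1 * M v k <= _).
  apply: ler_sum => v _; rewrite normrM (ger0_norm (M0 _ _)).
  apply: ler_wpM2r => //; exact: le_trans (dev v) hxi.
by rewrite -mulr_sumr Mc mulr1.
Qed.

Lemma Phi_ge0 (R : realType) n (c : 'I_n -> R) : 0 <= Phi c.
Proof. by apply: sumr_ge0 => w _; exact: sqr_ge0. Qed.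

Lemma chernoff (R : realType) n (Ms : nat -> 'I_n -> 'I_n) (x0 : 'I_n -> int) t1 t2 (k : 'I_n)
  (inv : forall t, (0 < t)%N -> forall u, Ms t (Ms t u) = u) :
  (t1 <= t2)%N ->
  `|Y0 R Ms x0 t2 k - avg_load R x0| <= (2 * n%:R)^-1 ->
  forall (delta th : R), 0 <= th ->
  Pr R [pred om : Omega n t1 | delta <= `|YY R Ms x0 t2 k om - avg_load R x0|]
  <= 2 * expR (th ^+ 2 * Phi (cc R Ms t2 k t1) - th * (delta - (2 * n%:R)^-1)).
Proof.
move=> h12 hY0 delta th th0.
set lam := delta - (2 * n%:R)^-1.
set Z := fun om : Omega n t1 => YY R Ms x0 t2 k om - Y0 R Ms x0 t2 k.
set S := \sum_(om : Omega n t1) (1 : R).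
have S0 : 0 < S.
  rewrite /S -cardT_sumR ltr0n; apply/card_gt0P.
  by exists [ffun=> [ffun=> false]].
rewrite /Pr card_sumR cardT_sumR -/S ler_pdivrMr //.
have pt om : (if delta <= `|YY R Ms x0 t2 k om - avg_load R x0| then 1 else 0)
    <= expR (- th * lam) * (expR (th * Z om) + expR (- th * Z om)).
  have e1 := expR_ge0 (th * Z om); have e2 := expR_ge0 (- th * Z om).
  have e3 := expR_ge0 (- th * lam).
  case: ifP => hA; last by apply: mulr_ge0 => //; exact: addr_ge0.
  have hZ : lam <= `|Z om|.
    have : `|YY R Ms x0 t2 k om - avg_load R x0| <= `|Z om| + `|Y0 R Ms x0 t2 k - avg_load R x0|.
      have -> : YY R Ms x0 t2 k om - avg_load R x0 = Z om + (Y0 R Ms x0 t2 k - avg_load R x0).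
        by rewrite /Z addrA subrK.
      exact: ler_normD.
    rewrite /lam; lra.
  rewrite (mulrDr (expR (- th * lam))) -!expRD.
  have [Zp|Zn] := lerP 0 (Z om).
    rewrite ger0_norm // in hZ.
    have := expR_ge1Dx (- th * lam + th * Z om).
    have : 0 <= th * (Z om - lam) by apply: mulr_ge0 => //; lra.
    have := expR_ge0 (- th * lam + - th * Z om).
    nra.
  rewrite ltr0_norm // in hZ.
  have := expR_ge1Dx (- th * lam + - th * Z om).
  have : 0 <= th * (- Z om - lam) by apply: mulr_ge0 => //; lra.
  have := expR_ge0 (- th * lam + th * Z om).
  nra.
apply: le_trans (ler_sum _ (fun om _ => pt om)) _.
rewrite -mulr_sumr big_split /=.
have m1 := mgf x0 k inv th h12.
have m2 := mgf x0 k inv (- th) h12.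
rewrite sqrrN in m2.
rewrite -/S in m1 m2.
have P0 := Phi_ge0 (cc R Ms t2 k 0).
have hE : expR (th ^+ 2 * (Phi (cc R Ms t2 k t1) - Phi (cc R Ms t2 k 0)))
          <= expR (th ^+ 2 * Phi (cc R Ms t2 k t1)).
  rewrite ler_expR; have := sqr_ge0 th; nra.
have m1' : \sum_om expR (th * Z om) <= S * expR (th ^+ 2 * Phi (cc R Ms t2 k t1)).
  apply: le_trans m1 _; apply: ler_wpM2l => //; exact: ltW.
have m2' : \sum_om expR (- th * Z om) <= S * expR (th ^+ 2 * Phi (cc R Ms t2 k t1)).
  apply: le_trans m2 _; apply: ler_wpM2l => //; exact: ltW.
have e3 := expR_ge0 (- th * lam).
apply: le_trans (ler_wpM2l e3 (lerD m1' m2')) _.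
have -> : th ^+ 2 * Phi (cc R Ms t2 k t1) - th * lam = th ^+ 2 * Phi (cc R Ms t2 k t1) + (- th * lam).
  by ring.
rewrite expRD le_eqVlt; apply/orP; left; apply/eqP; ring.
Qed.

Lemma part1 (R : realType) (n : nat) (Ms : nat -> 'I_n -> 'I_n) (x0 : 'I_n -> int) (K : R) (t1 t2 : nat)
  (inv : forall t, (0 < t)%N -> forall u, Ms t (Ms t u) = u) :
  discr (\row_u ((x0 u)%:~R : R)) <= K ->
  (t1 <= t2)%N ->
  smoothing Ms 0 t1 K (2 * n%:R)^-1 ->
  forall (k : 'I_n) (delta : R), n%:R^-1 < delta ->
     let M := match_prod R Ms t1.+1 t2 in
     let D := 4 * \sum_(w < n) (M w k - n%:R^-1) ^+ 2 in
     Pr R [pred om : Omega n t1 |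
           delta <= `|\sum_(w < n) (load Ms x0 (bits_of om) t1 w)%:~R * M w k
                      - avg_load R x0|]
     <= (if D == 0 then 0
         else 2 * expR (- (delta - (2 * n%:R)^-1) ^+ 2 / D)).
Proof.
move=> hK h12 hsm k delta hd.
change (Pr R [pred om : Omega n t1 | delta <= `|YY R Ms x0 t2 k om - avg_load R x0|]
  <= (if 4 * Phi (cc R Ms t2 k t1) == 0 then 0
      else 2 * expR (- (delta - (2 * n%:R)^-1) ^+ 2 / (4 * Phi (cc R Ms t2 k t1))))).
have hY0 := Y0_bound k inv hK h12 hsm.
have n0 : (0 < n)%N by exact: (leq_ltn_trans (leq0n k) (ltn_ord k)).
have nR : (0 : R) < n%:R by rewrite ltr0n.
have hn2 : (2 * n%:R)^-1 <= (n%:R : R)^-1.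
  rewrite lef_pV2 ?posrE ?mulr_gt0 //; lra.
have hn1 : 0 < (n%:R : R)^-1 by rewrite invr_gt0.
have P0 := Phi_ge0 (cc R Ms t2 k t1).
case: eqP => hD.
  have hP : Phi (cc R Ms t2 k t1) = 0 by lra.
  have hc w : cc R Ms t2 k t1 w = n%:R^-1.
    have : (cc R Ms t2 k t1 w - n%:R^-1) ^+ 2 == 0.
      move: hP => /eqP; rewrite /Phi psumr_eq0; last by move=> i _; exact: sqr_ge0.
      by move/allP/(_ w (mem_index_enum w)).
    by rewrite sqrf_eq0 subr_eq0 => /eqP.
  have hYY (om : Omega n t1) : YY R Ms x0 t2 k om = avg_load R x0.
    rewrite /YY /avg_load; under eq_bigr do rewrite hc.
    by rewrite -mulr_suml load_sum.
  rewrite /Pr card_sumR big1 ?mul0r // => om _.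
  rewrite /= hYY subrr normr0; case: lerP => //; lra.
have Pp : 0 < Phi (cc R Ms t2 k t1) by rewrite lt_neqAle eq_sym; apply/andP; split => //; apply/eqP => h; apply: hD; rewrite h mulr0.
set P := Phi (cc R Ms t2 k t1).
set lam := delta - (2 * n%:R)^-1.
have lam0 : 0 < lam by rewrite /lam; lra.
have th0 : 0 <= lam / (2 * P) by apply: divr_ge0; [exact: ltW | apply: mulr_ge0 => //; exact: ltW].
apply: le_trans (@chernoff R n Ms x0 t1 t2 k inv h12 hY0 delta _ th0) _.
rewrite -/P -/lam le_eqVlt; apply/orP; left; apply/eqP; congr (2 * expR _).
by field; rewrite gt_eqF.
Qed.

Lemma part2 (R : realType) (n : nat) (Ms : nat -> 'I_n -> 'I_n) (x0 : 'I_n -> int) (K : R) (t1 : nat)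
  (inv : forall t, (0 < t)%N -> forall u, Ms t (Ms t u) = u) :
  discr (\row_u ((x0 u)%:~R : R)) <= K ->
  smoothing Ms 0 t1 K (2 * n%:R)^-1 ->
  forall (w : 'I_n) (delta : R), n%:R^-1 < delta ->
     Pr R [pred om : Omega n t1 |
           delta <= `|(load Ms x0 (bits_of om) t1 w)%:~R - avg_load R x0|]
     <= 2 * expR (- (delta - (2 * n%:R)^-1) ^+ 2 / 4).
Proof.
move=> hK hsm w delta hd.
have n0 : (0 < n)%N by exact: (leq_ltn_trans (leq0n w) (ltn_ord w)).
have nR : (0 : R) < n%:R by rewrite ltr0n.
have I1 : match_prod R Ms t1.+1 t1 = 1%:M by rewrite /match_prod big_geq.
have H : Pr R [pred om : Omega n t1 |
           delta <= `|\sum_(u < n) (load Ms x0 (bits_of om) t1 u)%:~R * match_prod R Ms t1.+1 t1 u w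
                      - avg_load R x0|]
     <= (if 4 * \sum_(u < n) (match_prod R Ms t1.+1 t1 u w - n%:R^-1) ^+ 2 == 0 then 0
         else 2 * expR (- (delta - (2 * n%:R)^-1) ^+ 2 /
                        (4 * \sum_(u < n) (match_prod R Ms t1.+1 t1 u w - n%:R^-1) ^+ 2)))
  := @part1 R n Ms x0 K t1 t1 inv hK (leqnn t1) hsm w delta hd.
have E : Pr R [pred om : Omega n t1 |
           delta <= `|\sum_(u < n) (load Ms x0 (bits_of om) t1 u)%:~R * match_prod R Ms t1.+1 t1 u w
                      - avg_load R x0|] =
         Pr R [pred om : Omega n t1 |
           delta <= `|(load Ms x0 (bits_of om) t1 w)%:~R - avg_load R x0|].
  rewrite /Pr; congr (_%:R / _); apply: eq_card => om; rewrite !inE /=.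
  rewrite I1; congr (_ <= `|_ - _|).
  under eq_bigr do rewrite mxE mulrC eq_sym.
  by rewrite sum_delta.
rewrite -E; apply: le_trans H _.
have hPhi : \sum_(u < n) (match_prod R Ms t1.+1 t1 u w - n%:R^-1) ^+ 2 = 1 - n%:R^-1.
  rewrite I1.
  transitivity (\sum_(u < n) ((w == u)%:R * (1 - 2 * n%:R^-1) + n%:R^-1 ^+ 2 : R)).
    apply: eq_bigr => u _; rewrite mxE eq_sym; case: (w == u) => /=; ring.
  rewrite big_split /= sum_delta sumr_const card_ord -mulr_natr.
  by field; rewrite gt_eqF.
rewrite hPhi.
have hn1 : (n%:R : R)^-1 <= 1 by rewrite invf_le1 // ler1n.
have hn0 : 0 < (n%:R : R)^-1 by rewrite invr_gt0.
case: eqP => hD.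
  by apply: mulr_ge0 => //; exact: expR_ge0.
have Dp : 0 < 4 * (1 - (n%:R : R)^-1).
  rewrite lt_neqAle eq_sym; apply/andP; split; first by apply/eqP.
  lra.
rewrite ler_pM2l // ler_expR !mulNr lerN2.
apply: ler_wpM2l; first exact: sqr_ge0.
rewrite lef_pV2 ?posrE //; lra.
Qed.

Unset Implicit Arguments.
Set Strict Implicit.

Theorem lemma2p13 (R : realType) (n : nat) (e : rel 'I_n)
    (Ms : nat -> 'I_n -> 'I_n) (x0 : 'I_n -> int) (K : R) (t1 t2 : nat) :
  simple_graph e ->
  (forall t, (0 < t)%N -> is_matching e (Ms t)) ->
  discr (\row_u ((x0 u)%:~R : R)) <= K ->
  (t1 <= t2)%N ->
  smoothing Ms 0 t1 K (2 * n%:R)^-1 ->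
  (forall (k : 'I_n) (delta : R), n%:R^-1 < delta ->
     let M := match_prod R Ms t1.+1 t2 in
     let D := 4 * \sum_(w < n) (M w k - n%:R^-1) ^+ 2 in
     Pr R [pred om : Omega n t1 |
           delta <= `|\sum_(w < n) (load Ms x0 (bits_of om) t1 w)%:~R * M w k
                      - avg_load R x0|]
     <= (if D == 0 then 0
         else 2 * expR (- (delta - (2 * n%:R)^-1) ^+ 2 / D))) /\
  (forall (w : 'I_n) (delta : R), n%:R^-1 < delta ->
     Pr R [pred om : Omega n t1 |
           delta <= `|(load Ms x0 (bits_of om) t1 w)%:~R - avg_load R x0|]
     <= 2 * expR (- (delta - (2 * n%:R)^-1) ^+ 2 / 4)).
Proof.
move=> _ hm hK h12 hsm.
have inv : forall t, (0 < t)%N -> forall u, Ms t (Ms t u) = u.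
  by move=> t ht u; case: (hm t ht).
split.
  exact: (@part1 R n Ms x0 K t1 t2 inv hK h12 hsm).
exact: (@part2 R n Ms x0 K t1 inv hK hsm).
Qed.
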